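(* Let $n\ge2$, let $T_1,\dots,T_n$ be distinct triangles in $E$, and let $S$ be the set of vertices of $\bigcap_{i=1}^nT_i$. There exists $\epsilon_0>0$ such that for every $0<\epsilon<\epsilon_0$, letting $P$ be the convex hull of all vertices of $T_1^{(1-\epsilon)},\dots,T_n^{(1-\epsilon)}$, for every $S'\subseteq S$ with $|S'|<n$ the pair $(P,S')$ is a YES instance of the intermediate polygon problem, i.e. there is a triangle $T$ with $S'\subseteq T\subseteq P$.
   Context: For $d>0$ let $C_d=\{(x,y)\in\mathbb{R}^2: x^2+y^2\le d\}$, and $C=C_1$. $E$ is the set of all equilateral triangles $T\subseteq C$ whose vertices lie on the boundary of $C$. For $T\in E$, $T^{(1-\epsilon)}$ denotes the scaling of $T$ about the origin such that the vertices of $T^{(1-\epsilon)}$ lie on the boundary of $C_{1-\epsilon}$. An instance of the intermediate polygon problem is a polygon $P\subseteq\mathbb{R}^2$ and a finite point set; it is a YES instance if some triangle $T$ satisfies (point set) $\subseteq T\subseteq P$. *)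

(* Defs.v *)
From Stdlib Require Import Reals Lra List.
Open Scope R_scope.

Definition pt : Type := (R * R)%type.

Definition padd (p q : pt) : pt := (fst p + fst q, snd p + snd q).
Definition pscale (t : R) (p : pt) : pt := (t * fst p, t * snd p).
Definition pzero : pt := (0, 0).

Definition sqnorm (p : pt) : R := fst p * fst p + snd p * snd p.
Definition dist2 (p q : pt) : R :=
  (fst p - fst q) * (fst p - fst q) + (snd p - snd q) * (snd p - snd q).

Definition Cd (d : R) (p : pt) : Prop := sqnorm p <= d.
Definition C : pt -> Prop := Cd 1.

Definition convex_comb (l : list (R * pt)) : pt :=
  fold_right (fun wp acc => padd (pscale (fst wp) (snd wp)) acc) pzero l.

Definition conv (A : pt -> Prop) (x : pt) : Prop :=
  exists l : list (R * pt),
    (forall wp, In wp l -> 0 <= fst wp /\ A (snd wp)) /\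
    fold_right (fun wp s => fst wp + s) 0 l = 1 /\
    x = convex_comb l.

Definition conv3 (a b c : pt) : pt -> Prop :=
  conv (fun p => p = a \/ p = b \/ p = c).

Definition vertex (K : pt -> Prop) (x : pt) : Prop :=
  K x /\
  forall y z t, K y -> K z -> 0 < t < 1 ->
    x = padd (pscale t y) (pscale (1 - t) z) -> y = z.

Definition noncollinear (a b c : pt) : Prop :=
  (fst b - fst a) * (snd c - snd a) - (snd b - snd a) * (fst c - fst a) <> 0.

Definition is_triangle (T : pt -> Prop) : Prop :=
  exists a b c, noncollinear a b c /\ forall x, T x <-> conv3 a b c x.

Definition in_E (T : pt -> Prop) : Prop :=
  exists a b c : pt,
    sqnorm a = 1 /\ sqnorm b = 1 /\ sqnorm c = 1 /\
    a <> b /\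
    dist2 a b = dist2 b c /\ dist2 b c = dist2 c a /\
    (forall x, T x <-> conv3 a b c x).

(* Vertices of T^(1-eps): scaling about the origin placing the vertices of T
   on the boundary of C_{1-eps}, i.e. by the factor sqrt(1-eps). *)
Definition scaled_vertex (eps : R) (T : pt -> Prop) (y : pt) : Prop :=
  exists v, vertex T v /\ y = pscale (sqrt (1 - eps)) v.

Definition bigcap (n : nat) (T : nat -> pt -> Prop) (x : pt) : Prop :=
  forall i, (i < n)%nat -> T i x.

Definition hullP (n : nat) (T : nat -> pt -> Prop) (eps : R) : pt -> Prop :=
  conv (fun y => exists i, (i < n)%nat /\ scaled_vertex eps (T i) y).

Definition yes_instance (P : pt -> Prop) (S' : list pt) : Prop :=
  exists T : pt -> Prop, is_triangle T /\
    (forall s, In s S' -> T s) /\ (forall x, T x -> P x).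

(* Main.v *)
Require Import Defs.
From Stdlib Require Import Reals List Lra Lia Psatz Classical IndefiniteDescription.
Open Scope R_scope.

Definition dot (p q : pt) : R := fst p * fst q + snd p * snd q.
Definition det2 (p q : pt) : R := fst p * snd q - snd p * fst q.
Definition lin3 (x y z : R) (a b c : pt) : pt :=
  (x*fst a + y*fst b + z*fst c, x*snd a + y*snd b + z*snd c).
Definition frame (a b c : pt) : Prop :=
  dot a a = 1 /\ dot b b = 1 /\ dot a b = -1/2 /\
  fst a + fst b + fst c = 0 /\ snd a + snd b + snd c = 0.

Lemma pt_eq (p q : pt) : fst p = fst q -> snd p = snd q -> p = q.
Proof. destruct p, q; simpl; intros; subst; auto. Qed.

Lemma dot_comm p q : dot p q = dot q p.
Proof. unfold dot; ring. Qed.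

Lemma dot_lin3 x y z a b c q :
  dot (lin3 x y z a b c) q = x * dot a q + y * dot b q + z * dot c q.
Proof. unfold dot, lin3; simpl; ring. Qed.

Lemma frame_facts a b c : frame a b c ->
  dot c c = 1 /\ dot a c = -1/2 /\ dot b c = -1/2 /\
  (forall x, dot x a + dot x b + dot x c = 0).
Proof.
  destruct a as [a1 a2], b as [b1 b2], c as [c1 c2]; unfold frame, dot; simpl.
  intros [H1 [H2 [H3 [H4 H5]]]].
  replace c1 with (-a1-b1) by lra. replace c2 with (-a2-b2) by lra.
  repeat split; try nra. intros [x1 x2]; simpl; ring.
Qed.

Lemma frame_rot a b c : frame a b c -> frame b c a.
Proof.
  intro F. pose proof (frame_facts _ _ _ F) as [Hc [Hac [Hbc _]]].
  destruct F as [H1 [H2 [H3 [H4 H5]]]].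
  unfold frame; repeat split; auto; lra.
Qed.

Lemma frame_swap a b c : frame a b c -> frame b a c.
Proof.
  intro F. destruct F as [H1 [H2 [H3 [H4 H5]]]].
  unfold frame; repeat split; auto; try lra. rewrite dot_comm; auto.
Qed.

Lemma det2_sq a b : det2 a b * det2 a b = dot a a * dot b b - dot a b * dot a b.
Proof. unfold det2, dot; ring. Qed.

Lemma frame_det a b c : frame a b c -> det2 a b <> 0.
Proof.
  intros [H1 [H2 [H3 _]]] E. pose proof (det2_sq a b) as D.
  rewrite E, H1, H2, H3 in D. lra.
Qed.

Lemma frame_decomp a b c x : frame a b c ->
  x = lin3 ((1+2*dot x a)/3) ((1+2*dot x b)/3) ((1+2*dot x c)/3) a b c.
Proof.
  intro F. pose proof (frame_det _ _ _ F) as D.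
  pose proof (frame_facts _ _ _ F) as [_ [_ [_ Hs]]].
  destruct F as [H1 [H2 [H3 [H4 H5]]]].
  set (m := det2 x b / det2 a b). set (n := det2 a x / det2 a b).
  assert (Hx : x = (m*fst a + n*fst b, m*snd a + n*snd b)).
  { unfold m, n. destruct x as [x1 x2], a as [a1 a2], b as [b1 b2].
    unfold det2 in *; simpl in *. apply pt_eq; simpl; field; auto. }
  clearbody m n.
  assert (Ea : dot x a = m - n/2).
  { rewrite Hx. transitivity (m * dot a a + n * dot a b).
    { unfold dot; simpl. ring. } rewrite H1, H3; lra. }
  assert (Eb : dot x b = -m/2 + n).
  { rewrite Hx. transitivity (m * dot a b + n * dot b b).
    { unfold dot; simpl; ring. } rewrite H2, H3; lra. }
  assert (Ec : dot x c = - dot x a - dot x b) by (specialize (Hs x); lra).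
  rewrite Ec, Ea, Eb. rewrite Hx at 1.
  unfold lin3; apply pt_eq; simpl.
  - replace (fst c) with (- fst a - fst b) by lra. field.
  - replace (snd c) with (- snd a - snd b) by lra. field.
Qed.
Definition wsum (l : list (R * pt)) : R := fold_right (fun wp s => fst wp + s) 0 l.

Lemma cc_app l1 l2 : convex_comb (l1 ++ l2) = padd (convex_comb l1) (convex_comb l2).
Proof.
  induction l1 as [|[w p] l IH]; simpl.
  - apply pt_eq; unfold padd, pzero; simpl; ring.
  - rewrite IH. apply pt_eq; unfold padd, pscale; simpl; ring.
Qed.

Lemma ws_app l1 l2 : wsum (l1 ++ l2) = wsum l1 + wsum l2.
Proof. induction l1 as [|[w p] l IH]; simpl; [ring| unfold wsum in *; simpl; rewrite IH; ring]. Qed.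

Definition scl (w : R) (l : list (R*pt)) := map (fun wp => (w * fst wp, snd wp)) l.

Lemma cc_scl w l : convex_comb (scl w l) = pscale w (convex_comb l).
Proof.
  induction l as [|[v p] l IH]; simpl.
  - apply pt_eq; unfold pscale, pzero; simpl; ring.
  - rewrite IH. apply pt_eq; unfold padd, pscale; simpl; ring.
Qed.

Lemma ws_scl w l : wsum (scl w l) = w * wsum l.
Proof. induction l as [|[v p] l IH]; unfold wsum in *; simpl; [ring| rewrite IH; ring]. Qed.

Lemma conv_trans (A B : pt -> Prop) x :
  (forall y, B y -> conv A y) -> conv B x -> conv A x.
Proof.
  intros HB [l [Hl [Hs Hx]]].
  assert (G : forall l, (forall wp, In wp l -> 0 <= fst wp /\ B (snd wp)) ->
    exists l', (forall wp, In wp l' -> 0 <= fst wp /\ A (snd wp)) /\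
      wsum l' = wsum l /\ convex_comb l' = convex_comb l).
  { clear -HB. intro l. induction l as [|[w p] l IH]; intro H.
    - exists nil; simpl; repeat split; tauto.
    - destruct IH as [l' [H1 [H2 H3]]]. { intros wp Hw; apply H; simpl; auto. }
      destruct (H (w,p)) as [Hw Hp]; [simpl; auto|]. simpl in Hw, Hp.
      destruct (HB p Hp) as [lp [Hlp [Hsp Hp']]].
      exists (scl w lp ++ l'). split; [|split].
      + intros wq Hin. apply in_app_or in Hin as [Hin|Hin].
        * unfold scl in Hin. apply in_map_iff in Hin as [[v q] [E Hin]].
          subst wq; simpl. destruct (Hlp _ Hin) as [Hv Hq]; simpl in *. split; auto.
          apply Rmult_le_pos; auto.
        * auto.
      + rewrite ws_app, ws_scl, H2. unfold wsum in *. simpl. rewrite Hsp. ring.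
      + rewrite cc_app, cc_scl, H3, <- Hp'. reflexivity. }
  destruct (G l Hl) as [l' [H1 [H2 H3]]].
  exists l'. split; [auto|split]. unfold wsum in H2. rewrite H2; auto. rewrite H3; auto.
Qed.

Lemma conv_in (A : pt -> Prop) x : A x -> conv A x.
Proof.
  intro H. exists ((1, x) :: nil). split; [|split]; simpl.
  - intros wp [E|[]]; subst; simpl; split; auto; lra.
  - ring.
  - apply pt_eq; unfold padd, pscale, pzero; simpl; ring.
Qed.

Lemma conv_seg (A : pt -> Prop) y z t : A y -> A z -> 0 <= t <= 1 ->
  conv A (padd (pscale (1-t) y) (pscale t z)).
Proof.
  intros Hy Hz Ht. exists ((1-t, y) :: (t, z) :: nil). split; [|split]; simpl.
  - intros wp [E|[E|[]]]; subst; simpl; split; auto; lra.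
  - ring.
  - apply pt_eq; unfold padd, pscale, pzero; simpl; ring.
Qed.

Lemma conv3_bary a b c x : conv3 a b c x <->
  exists la lb lc, 0 <= la /\ 0 <= lb /\ 0 <= lc /\ la + lb + lc = 1 /\
    x = lin3 la lb lc a b c.
Proof.
  split.
  - intros [l [Hl [Hs Hx]]].
    assert (G : forall l, (forall wp, In wp l -> 0 <= fst wp /\
        (snd wp = a \/ snd wp = b \/ snd wp = c)) ->
      exists la lb lc, 0 <= la /\ 0 <= lb /\ 0 <= lc /\ la + lb + lc = wsum l /\
        convex_comb l = lin3 la lb lc a b c).
    { clear. intro l. induction l as [|[w p] l IH]; intro H.
      - exists 0, 0, 0; repeat split; try lra. unfold wsum; simpl; ring.
        apply pt_eq; unfold lin3, pzero; simpl; ring.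
      - destruct IH as [la [lb [lc [H1 [H2 [H3 [H4 H5]]]]]]].
        { intros wp Hw; apply H; simpl; auto. }
        destruct (H (w,p)) as [Hw Hp]; [simpl; auto|]. simpl in Hw, Hp.
        unfold wsum in *; simpl; simpl in H4. rewrite H5.
        destruct Hp as [E|[E|E]]; subst p.
        + exists (w+la), lb, lc; repeat split; try lra.
          apply pt_eq; unfold lin3, padd, pscale; simpl; ring.
        + exists la, (w+lb), lc; repeat split; try lra.
          apply pt_eq; unfold lin3, padd, pscale; simpl; ring.
        + exists la, lb, (w+lc); repeat split; try lra.
          apply pt_eq; unfold lin3, padd, pscale; simpl; ring. }
    destruct (G l Hl) as [la [lb [lc [H1 [H2 [H3 [H4 H5]]]]]]].
    exists la, lb, lc; repeat split; auto. unfold wsum in H4; lra. rewrite Hx; auto.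
  - intros [la [lb [lc [H1 [H2 [H3 [H4 H5]]]]]]].
    exists ((la,a)::(lb,b)::(lc,c)::nil). split; [|split]; simpl.
    + intros wp [E|[E|[E|[]]]]; subst; simpl; auto.
    + lra.
    + rewrite H5. apply pt_eq; unfold lin3, padd, pscale, pzero; simpl; ring.
Qed.
Lemma sq0 x y : x*x + y*y = 0 -> x = 0 /\ y = 0.
Proof.
  intro H. assert (x*x = 0) by nra. assert (y*y = 0) by nra.
  split; [apply Rmult_integral in H0 as [?|?]| apply Rmult_integral in H1 as [?|?]]; auto.
Qed.

Lemma tri_iff a b c x : frame a b c ->
  (conv3 a b c x <-> dot x a >= -1/2 /\ dot x b >= -1/2 /\ dot x c >= -1/2).
Proof.
  intro F. pose proof (frame_facts _ _ _ F) as [Hc [Hac [Hbc Hs]]].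
  pose proof F as [H1 [H2 [H3 _]]].
  rewrite conv3_bary. split.
  - intros [la [lb [lc [L1 [L2 [L3 [L4 E]]]]]]]. subst x.
    rewrite !dot_lin3. rewrite (dot_comm b a), (dot_comm c a), (dot_comm c b).
    rewrite H1, H2, H3, Hc, Hac, Hbc. repeat split; lra.
  - intros [Ha [Hb Hcc]]. specialize (Hs x).
    exists ((1+2*dot x a)/3), ((1+2*dot x b)/3), ((1+2*dot x c)/3).
    repeat split; try lra. apply frame_decomp; auto.
Qed.

Lemma unit_eq u v : dot u u = 1 -> dot v v = 1 -> dot u v = 1 -> u = v.
Proof.
  destruct u as [u1 u2], v as [v1 v2]; unfold dot; simpl; intros.
  assert ((u1-v1)*(u1-v1) + (u2-v2)*(u2-v2) = 0) by nra.
  apply sq0 in H2 as [? ?]. apply pt_eq; simpl; lra.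
Qed.

Lemma frame_two a b c s : frame a b c -> dot s a = -1/2 -> dot s b = -1/2 -> s = c.
Proof.
  intros F Ha Hb. pose proof (frame_facts _ _ _ F) as [_ [_ [_ Hs]]].
  specialize (Hs s). rewrite (frame_decomp a b c s F), Ha, Hb.
  replace (dot s c) with 1 by lra.
  apply pt_eq; unfold lin3; simpl; field.
Qed.

Lemma line_circle a b c u : frame a b c -> dot u u = 1 -> dot u c = -1/2 -> u = a \/ u = b.
Proof.
  intros F Hu Hc. pose proof (frame_facts _ _ _ F) as [_ [_ [_ Hs]]].
  pose proof (Hs u) as Hsu.
  pose proof (frame_decomp a b c u F) as D.
  assert (Huu : dot u u = dot (lin3 ((1+2*dot u a)/3) ((1+2*dot u b)/3) ((1+2*dot u c)/3) a b c) u)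
    by (rewrite <- D; reflexivity).
  rewrite dot_lin3, (dot_comm a u), (dot_comm b u), (dot_comm c u), Hc in Huu.
  assert (Hb : dot u b = 1/2 - dot u a) by lra. rewrite Hb in Huu.
  assert (dot u a = 1 \/ dot u a = -1/2) as [E|E] by nra.
  - left. rewrite D, E, Hb, Hc, E. apply pt_eq; unfold lin3; simpl; field.
  - right. rewrite D, E, Hb, Hc, E. apply pt_eq; unfold lin3; simpl; field.
Qed.

Lemma vertex_frame (K : pt -> Prop) a b c : frame a b c ->
  (forall x, K x -> dot x a >= -1/2 /\ dot x b >= -1/2 /\ dot x c >= -1/2) ->
  K a -> vertex K a.
Proof.
  intros F HK Ka. split; auto.
  pose proof (frame_facts _ _ _ F) as [_ [_ [_ Hs]]].
  pose proof F as [H1 _].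
  assert (Key : forall y, K y -> dot y a = 1 -> y = a).
  { intros y Ky E. destruct (HK y Ky) as [_ [Hb Hc]]. pose proof (Hs y).
    assert (dot y b = -1/2) by lra. assert (dot y c = -1/2) by lra.
    apply unit_eq; auto.
    rewrite (frame_decomp a b c y F) at 1.
    rewrite dot_lin3. rewrite !(dot_comm _ y). rewrite E. 
    replace (dot y b) with (-1/2) by lra. replace (dot y c) with (-1/2) by lra. field. }
  intros y z t Ky Kz Ht Ha.
  assert (Ea : dot a a = dot (padd (pscale t y) (pscale (1-t) z)) a) by (rewrite <- Ha; reflexivity).
  assert (Ey : dot y a <= 1) by (destruct (HK y Ky) as [_ [? ?]]; specialize (Hs y); lra).
  assert (Ez : dot z a <= 1) by (destruct (HK z Kz) as [_ [? ?]]; specialize (Hs z); lra).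
  assert (E2 : dot (padd (pscale t y) (pscale (1-t) z)) a = t * dot y a + (1-t) * dot z a)
    by (unfold dot, padd, pscale; simpl; ring).
  rewrite E2, H1 in Ea.
  assert (dot y a = 1) by nra. assert (dot z a = 1) by nra.
  rewrite (Key y Ky), (Key z Kz); auto.
Qed.

Lemma frame_of_E a b c : sqnorm a = 1 -> sqnorm b = 1 -> sqnorm c = 1 -> a <> b ->
  dist2 a b = dist2 b c -> dist2 b c = dist2 c a -> frame a b c.
Proof.
  destruct a as [a1 a2], b as [b1 b2], c as [c1 c2]; unfold sqnorm, dist2, frame, dot; simpl.
  intros Ha Hb Hc Hne E1 E2.
  set (k := a1*b1 + a2*b2).
  assert (K1 : b1*c1+b2*c2 = k) by (unfold k; nra).
  assert (K2 : c1*a1+c2*a2 = k) by (unfold k; nra).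
  assert (G : (a1*a1+a2*a2)*(b1*b1+b2*b2)*(c1*c1+c2*c2) + 2*(a1*b1+a2*b2)*(b1*c1+b2*c2)*(c1*a1+c2*a2)
     - (a1*a1+a2*a2)*(b1*c1+b2*c2)*(b1*c1+b2*c2) - (b1*b1+b2*b2)*(c1*a1+c2*a2)*(c1*a1+c2*a2)
     - (c1*c1+c2*c2)*(a1*b1+a2*b2)*(a1*b1+a2*b2) = 0) by ring.
  rewrite Ha, Hb, Hc, K1, K2 in G. fold k in G.
  assert (Hk1 : k <> 1).
  { intro E. apply Hne. assert ((a1-b1)*(a1-b1)+(a2-b2)*(a2-b2) = 0) by (unfold k in E; nra).
    apply sq0 in H as [? ?]. f_equal; lra. }
  assert (Hk : k = -1/2).
  { assert ((1-k)*(1-k)*(1+2*k) = 0) by nra.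
    assert ((1-k)*(1-k) <> 0) by (intro; apply Hk1; nra). 
    assert (1 + 2*k = 0).
    { apply Rmult_integral in H as [H|H]; auto; contradiction. }
    lra. }
  assert (S : (a1+b1+c1)*(a1+b1+c1) + (a2+b2+c2)*(a2+b2+c2) = 0).
  { transitivity ((a1*a1+a2*a2)+(b1*b1+b2*b2)+(c1*c1+c2*c2) + 2*k + 2*(b1*c1+b2*c2) + 2*(c1*a1+c2*a2)).
    - unfold k; ring.
    - rewrite Ha, Hb, Hc, K1, K2, Hk. lra. }
  apply sq0 in S as [S1 S2].
  unfold k in Hk; repeat split; lra.
Qed.
Lemma frame_unit a b c : frame a b c -> dot a a = 1 /\ dot b b = 1 /\ dot c c = 1.
Proof. intro F. pose proof (frame_facts _ _ _ F) as [? _]. destruct F as [? [? _]]. auto. Qed.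

Lemma frame_ne a b c : frame a b c -> a <> b /\ b <> c /\ a <> c.
Proof.
  intro F. pose proof (frame_facts _ _ _ F) as [Hc [Hac [Hbc _]]].
  destruct F as [H1 [H2 [H3 _]]].
  repeat split; intro E; subst; lra.
Qed.

Lemma Fgen a b c d1 d2 d3 : frame a b c -> frame d1 d2 d3 ->
  dot c d1 >= -1/2 -> dot c d2 >= -1/2 -> dot c d3 >= -1/2 ->
  forall x, (dot x a >= -1/2 /\ dot x b >= -1/2 /\ dot x c >= -1/2) <->
            (dot x d1 >= -1/2 /\ dot x d2 >= -1/2 /\ dot x d3 >= -1/2).
Proof.
  intros F G Y1 Y2 Y3.
  pose proof (frame_facts _ _ _ G) as [_ [_ [_ Hs]]].
  pose proof (frame_unit _ _ _ F) as [Ua [Ub Uc]].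
  pose proof (frame_unit _ _ _ G) as [U1 [U2 U3]].
  pose proof (frame_ne _ _ _ G) as [N12 [N23 N13]].
  pose proof (Hs c) as Y0.
  assert (Y : dot c c = dot (lin3 ((1+2*dot c d1)/3) ((1+2*dot c d2)/3) ((1+2*dot c d3)/3) d1 d2 d3) c)
    by (rewrite <- (frame_decomp _ _ _ c G); reflexivity).
  rewrite dot_lin3, Uc, (dot_comm d1 c), (dot_comm d2 c), (dot_comm d3 c) in Y.
  set (y1 := dot c d1) in *. set (y2 := dot c d2) in *. set (y3 := dot c d3) in *.
  assert (Z : (y1+1/2)*(y2+1/2) + (y1+1/2)*(y3+1/2) + (y2+1/2)*(y3+1/2) = 0) by nra.
  assert (Z1 : (y1+1/2)*(y2+1/2) = 0) by nra.
  assert (Z2 : (y1+1/2)*(y3+1/2) = 0) by nra.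
  assert (Z3 : (y2+1/2)*(y3+1/2) = 0) by nra.
  assert (Fin : forall e1 e2 e3, dot e1 e1 = 1 -> dot e2 e2 = 1 -> dot e3 e3 = 1 -> e1 <> e2 ->
     dot c e1 = -1/2 -> dot c e2 = -1/2 -> dot c e3 = 1 ->
     forall x, (dot x a >= -1/2 /\ dot x b >= -1/2 /\ dot x c >= -1/2) <->
            (dot x e1 >= -1/2 /\ dot x e2 >= -1/2 /\ dot x e3 >= -1/2)).
  { intros e1 e2 e3 V1 V2 V3 N E1 E2 E3 x.
    assert (e3 = c) by (apply unit_eq; auto; rewrite dot_comm; auto). subst e3.
    rewrite dot_comm in E1, E2.
    destruct (line_circle a b c e1 F V1 E1) as [->| ->];
    destruct (line_circle a b c e2 F V2 E2) as [->| ->]; try (exfalso; apply N; reflexivity); tauto. }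
  apply Rmult_integral in Z1 as [Z1|Z1]; apply Rmult_integral in Z2 as [Z2|Z2];
    apply Rmult_integral in Z3 as [Z3|Z3].
  all: first
    [ assert (y3 = 1) by lra; apply Fin; auto; unfold y1, y2, y3 in *; lra
    | assert (y2 = 1) by lra;
      intro x; rewrite (Fin d1 d3 d2); auto; [tauto | unfold y1, y2, y3 in *; lra ..]
    | assert (y1 = 1) by lra;
      intro x; rewrite (Fin d2 d3 d1); auto; [tauto | unfold y1, y2, y3 in *; lra ..] ].
Qed.

Lemma uniq2 u v s s' : det2 u v <> 0 -> dot s u = dot s' u -> dot s v = dot s' v -> s = s'.
Proof.
  destruct u as [u1 u2], v as [v1 v2], s as [s1 s2], s' as [t1 t2]; unfold det2, dot; simpl.
  intros D E1 E2.
  assert ((s1 - t1) * (u1*v2 - u2*v1) = 0).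
  { replace ((s1 - t1) * (u1*v2 - u2*v1)) with
      (v2*((s1*u1+s2*u2) - (t1*u1+t2*u2)) - u2*((s1*v1+s2*v2)-(t1*v1+t2*v2))) by ring.
    rewrite E1, E2; ring. }
  assert ((s2 - t2) * (u1*v2 - u2*v1) = 0).
  { replace ((s2 - t2) * (u1*v2 - u2*v1)) with
      (u1*((s1*v1+s2*v2)-(t1*v1+t2*v2)) - v1*((s1*u1+s2*u2) - (t1*u1+t2*u2))) by ring.
    rewrite E1, E2; ring. }
  apply Rmult_integral in H as [H|H]; [|contradiction].
  apply Rmult_integral in H0 as [H0|H0]; [|contradiction].
  f_equal; lra.
Qed.

Lemma three_line u1 u2 w s : det2 u1 u2 <> 0 -> dot u1 u1 = 1 -> dot u2 u2 = 1 -> dot w w = 1 ->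
  dot s u1 = -1/2 -> dot s u2 = -1/2 -> dot s w = -1/2 -> w = u1 \/ w = u2.
Proof.
  intros D H1 H2 Hw E1 E2 Ew.
  set (m := det2 w u2 / det2 u1 u2). set (k := det2 u1 w / det2 u1 u2).
  assert (Hx : w = (m*fst u1 + k*fst u2, m*snd u1 + k*snd u2)).
  { unfold m, k. destruct w as [x1 x2], u1 as [a1 a2], u2 as [b1 b2].
    unfold det2 in *; simpl in *. apply pt_eq; simpl; field; auto. }
  clearbody m k.
  assert (Es : dot s w = m * dot s u1 + k * dot s u2) by (rewrite Hx; unfold dot; simpl; ring).
  rewrite E1, E2, Ew in Es.
  assert (Ew2 : dot w w = m*m*dot u1 u1 + k*k*dot u2 u2 + 2*m*k*dot u1 u2)
    by (rewrite Hx; unfold dot; simpl; ring).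
  rewrite H1, H2, Hw in Ew2.
  assert (G : dot u1 u2 <> 1).
  { intro G. apply D. rewrite (unit_eq u1 u2); auto. unfold det2; ring. }
  assert (m * k * (dot u1 u2 - 1) = 0) by nra.
  apply Rmult_integral in H as [H|H]; [|exfalso; apply G; lra].
  apply Rmult_integral in H as [H|H].
  - right. rewrite Hx. subst m. assert (k = 1) by lra. subst k. apply pt_eq; simpl; ring.
  - left. rewrite Hx. subst k. assert (m = 1) by lra. subst m. apply pt_eq; simpl; ring.
Qed.
Lemma fin_unif (n : nat) (Q : nat -> R -> Prop) :
  (forall i, (i < n)%nat -> exists e, 0 < e /\ forall h, 0 < h < e -> Q i h) ->
  exists e, 0 < e /\ forall i, (i < n)%nat -> forall h, 0 < h < e -> Q i h.
Proof.
  induction n as [|n IH]; intro H.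
  - exists 1; split; [lra| intros; lia].
  - destruct IH as [e1 [He1 H1]]. { intros i Hi; apply H; lia. }
    destruct (H n) as [e2 [He2 H2]]. lia.
    exists (Rmin e1 e2); split. { apply Rmin_glb_lt; auto. }
    intros i Hi h Hh. assert (Rmin e1 e2 <= e1) by apply Rmin_l.
    assert (Rmin e1 e2 <= e2) by apply Rmin_r.
    destruct (Nat.eq_dec i n) as [->|Hne].
    + apply H2; lra.
    + apply H1; [lia| lra].
Qed.

Lemma fin_unif2 (n : nat) (Q : nat -> nat -> R -> Prop) :
  (forall i k, (i < n)%nat -> (k < 3)%nat -> exists e, 0 < e /\ forall h, 0 < h < e -> Q i k h) ->
  exists e, 0 < e /\ forall i k, (i < n)%nat -> (k < 3)%nat -> forall h, 0 < h < e -> Q i k h.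
Proof.
  intro H.
  destruct (fin_unif n (fun i h => forall k, (k < 3)%nat -> Q i k h)) as [e [He He']].
  - intros i Hi. destruct (fin_unif 3 (fun k h => Q i k h)) as [e [He He']].
    { intros k Hk. apply H; auto. }
    exists e; split; auto.
  - exists e; split; auto.
Qed.

Lemma cs_bound u v : dot u u = 1 -> dot v v = 1 -> -1 <= dot u v <= 1.
Proof.
  intros Hu Hv. pose proof (det2_sq u v) as D. rewrite Hu, Hv in D.
  assert (0 <= det2 u v * det2 u v) by nra. nra.
Qed.

Lemma sqrt_facts eps : 0 < eps < 1/2 ->
  let r := sqrt (1 - eps) in r * r = 1 - eps /\ 1/2 < r /\ r < 1 /\ 1 - eps <= r.
Proof.
  intros He r. assert (Hr2 : r * r = 1 - eps) by (apply sqrt_sqrt; lra).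
  assert (Hr0 : 0 <= r) by apply sqrt_pos.
  repeat split; auto; nra.
Qed.
Definition Good (n : nat) (T : nat -> pt -> Prop) (V : nat -> nat -> pt) : Prop :=
  forall i, (i < n)%nat -> frame (V i 0%nat) (V i 1%nat) (V i 2%nat) /\
    forall x, T i x <-> conv3 (V i 0%nat) (V i 1%nat) (V i 2%nat) x.

Definition Kc (n : nat) (V : nat -> nat -> pt) (x : pt) : Prop :=
  forall i k, (i < n)%nat -> (k < 3)%nat -> dot x (V i k) >= -1/2.

Definition Distinct (n : nat) (T : nat -> pt -> Prop) : Prop :=
  forall i j, (i < n)%nat -> (j < n)%nat -> i <> j -> ~ (forall x, T i x <-> T j x).

Lemma good_exists n T : (forall i, (i < n)%nat -> in_E (T i)) -> exists V, Good n T V.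
Proof.
  intro HE.
  assert (H : forall i, exists tr : pt * pt * pt, (i < n)%nat ->
     frame (fst (fst tr)) (snd (fst tr)) (snd tr) /\
     forall x, T i x <-> conv3 (fst (fst tr)) (snd (fst tr)) (snd tr) x).
  { intro i. destruct (Nat.lt_ge_cases i n) as [Hi|Hi].
    - destruct (HE i Hi) as [a [b [c [H1 [H2 [H3 [H4 [H5 [H6 H7]]]]]]]]].
      exists (a, b, c); intros _; simpl. split; auto. apply frame_of_E; auto.
    - exists (pzero, pzero, pzero). intro; lia. }
  exists (fun i k => let tr := proj1_sig (constructive_indefinite_description _ (H i)) in
     match k with 0%nat => fst (fst tr) | 1%nat => snd (fst tr) | _ => snd tr end).
  intros i Hi. simpl.
  destruct (constructive_indefinite_description _ (H i)) as [tr Htr]. simpl. auto.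
Qed.

Lemma all3 (P : nat -> Prop) k : (k < 3)%nat ->
  ((forall l, (l < 3)%nat -> P l) <-> P ((k+1) mod 3)%nat /\ P ((k+2) mod 3)%nat /\ P k).
Proof.
  intro Hk. split.
  - intro H. repeat split; apply H; try lia; apply Nat.mod_upper_bound; lia.
  - intros [H1 [H2 H3]] l Hl.
    destruct k as [|[|[|k]]]; try lia; simpl in *;
    destruct l as [|[|[|l]]]; try lia; auto.
Qed.

Lemma T_iff n T V i x : Good n T V -> (i < n)%nat ->
  (T i x <-> forall k, (k < 3)%nat -> dot x (V i k) >= -1/2).
Proof.
  intros G Hi. destruct (G i Hi) as [F HT]. rewrite HT, tri_iff by auto.
  rewrite (all3 (fun k => dot x (V i k) >= -1/2) 2) by lia. simpl. tauto.
Qed.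

Lemma bigcap_iff n T V x : Good n T V -> (bigcap n T x <-> Kc n V x).
Proof.
  intro G. unfold bigcap, Kc. split.
  - intros H i k Hi Hk. pose proof (H i Hi) as H'. rewrite (T_iff n T V i x G Hi) in H'. apply H'; auto.
  - intros H i Hi. rewrite (T_iff n T V i x G Hi). intros; auto.
Qed.

Lemma frame_k n T V i k : Good n T V -> (i < n)%nat -> (k < 3)%nat ->
  frame (V i ((k+1) mod 3)%nat) (V i ((k+2) mod 3)%nat) (V i k).
Proof.
  intros G Hi Hk. destruct (G i Hi) as [F _].
  destruct k as [|[|[|k]]]; try lia; simpl.
  - apply frame_rot; auto.
  - apply frame_rot, frame_rot; auto.
  - auto.
Qed.

Lemma unit_V n T V i k : Good n T V -> (i < n)%nat -> (k < 3)%nat -> dot (V i k) (V i k) = 1.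
Proof. intros G Hi Hk. destruct (frame_unit _ _ _ (frame_k n T V i k G Hi Hk)) as [_ [_ ?]]; auto. Qed.

Lemma dot_in_tri n T V i k l : Good n T V -> (i < n)%nat -> (k < 3)%nat -> (l < 3)%nat ->
  dot (V i k) (V i l) >= -1/2.
Proof.
  intros G Hi Hk Hl. pose proof (frame_k n T V i k G Hi Hk) as F.
  pose proof (frame_facts _ _ _ F) as [Hc [Hac [Hbc _]]].
  destruct F as [H1 [H2 _]].
  assert (C : l = k \/ l = ((k+1) mod 3)%nat \/ l = ((k+2) mod 3)%nat).
  { destruct k as [|[|[|k]]]; try lia; simpl; lia. }
  destruct C as [->|[->| ->]]; rewrite ?(dot_comm (V i k)); lra.
Qed.

Lemma same_tri n T V i j k : Good n T V -> Distinct n T -> (i < n)%nat -> (j < n)%nat -> i <> j ->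
  (k < 3)%nat -> ~ (forall l, (l < 3)%nat -> dot (V i k) (V j l) >= -1/2).
Proof.
  intros G D Hi Hj Hij Hk H. apply (D i j Hi Hj Hij). intro x.
  pose proof (frame_k n T V i k G Hi Hk) as F. destruct (G j Hj) as [Fj _].
  pose proof (Fgen _ _ _ _ _ _ F Fj (H 0%nat ltac:(lia)) (H 1%nat ltac:(lia)) (H 2%nat ltac:(lia)) x) as E.
  rewrite (T_iff n T V i x G Hi), (T_iff n T V j x G Hj).
  rewrite (all3 (fun l => dot x (V i l) >= -1/2) k Hk).
  rewrite (all3 (fun l => dot x (V j l) >= -1/2) 2) by lia. simpl. tauto.
Qed.

Lemma shared n T V i j k l : Good n T V -> Distinct n T -> (i < n)%nat -> (j < n)%nat ->
  (k < 3)%nat -> (l < 3)%nat -> V i k = V j l -> i = j.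
Proof.
  intros G D Hi Hj Hk Hl E. destruct (Nat.eq_dec i j) as [|Hij]; auto. exfalso.
  apply (same_tri n T V i j k G D Hi Hj Hij Hk). intros l' Hl'. rewrite E.
  apply (dot_in_tri n T V); auto.
Qed.

Lemma other_idx n i : (2 <= n)%nat -> (i < n)%nat -> exists j, (j < n)%nat /\ i <> j.
Proof. intros. destruct i; [exists 1%nat| exists 0%nat]; lia. Qed.

Lemma two_edges n T V s i k1 k2 : Good n T V -> Distinct n T -> (2 <= n)%nat -> Kc n V s ->
  (i < n)%nat -> (k1 < 3)%nat -> (k2 < 3)%nat -> k1 <> k2 ->
  dot s (V i k1) = -1/2 -> dot s (V i k2) = -1/2 -> False.
Proof.
  intros G D Hn K Hi Hk1 Hk2 Hne E1 E2.
  assert (Th : forall k3, (k3 < 3)%nat ->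
     ((k1 = ((k3+1) mod 3)%nat /\ k2 = ((k3+2) mod 3)%nat) \/
      (k2 = ((k3+1) mod 3)%nat /\ k1 = ((k3+2) mod 3)%nat)) -> s = V i k3).
  { intros k3 Hk3 [[-> ->]|[-> ->]].
    - apply (frame_two _ _ _ s (frame_k n T V i k3 G Hi Hk3)); auto.
    - apply (frame_two _ _ _ s (frame_swap _ _ _ (frame_k n T V i k3 G Hi Hk3))); auto. }
  assert (Ex : exists k3, (k3 < 3)%nat /\ s = V i k3).
  { destruct k1 as [|[|[|k1]]]; destruct k2 as [|[|[|k2]]]; try lia.
    - exists 2%nat; split; [lia|]. apply Th; [lia|]. simpl; auto.
    - exists 1%nat; split; [lia|]. apply Th; [lia|]. simpl; auto.
    - exists 2%nat; split; [lia|]. apply Th; [lia|]. simpl; auto.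
    - exists 0%nat; split; [lia|]. apply Th; [lia|]. simpl; auto.
    - exists 1%nat; split; [lia|]. apply Th; [lia|]. simpl; auto.
    - exists 0%nat; split; [lia|]. apply Th; [lia|]. simpl; auto. }
  destruct Ex as [k3 [Hk3 Es]].
  destruct (other_idx n i Hn Hi) as [j [Hj Hij]].
  apply (same_tri n T V i j k3 G D Hi Hj Hij Hk3). intros l Hl.
  rewrite <- Es. apply K; auto.
Qed.
Lemma dot_shift s e h u : dot (padd s (pscale h e)) u = dot s u + h * dot e u.
Proof. unfold dot, padd, pscale; simpl; ring. Qed.

Lemma vertexG n T V s : Good n T V -> vertex (bigcap n T) s ->
  exists i1 k1 i2 k2, (i1 < n)%nat /\ (k1 < 3)%nat /\ (i2 < n)%nat /\ (k2 < 3)%nat /\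
    dot s (V i1 k1) = -1/2 /\ dot s (V i2 k2) = -1/2 /\ det2 (V i1 k1) (V i2 k2) <> 0.
Proof.
  intros G [Ks Hext]. rewrite (bigcap_iff n T V s G) in Ks.
  apply NNPP; intro Hno.
  assert (Ee : exists e : pt, e <> (0,0) /\ forall i k, (i < n)%nat -> (k < 3)%nat ->
             dot s (V i k) = -1/2 -> dot e (V i k) = 0).
  { destruct (classic (exists i0 k0, (i0 < n)%nat /\ (k0 < 3)%nat /\ dot s (V i0 k0) = -1/2))
      as [[i0 [k0 [Hi0 [Hk0 A0]]]]|Hn0].
    - exists (- snd (V i0 k0), fst (V i0 k0)). split.
      + intro E. injection E as E1 E2. pose proof (unit_V n T V i0 k0 G Hi0 Hk0) as U.
        unfold dot in U. nra.
      + intros i k Hi Hk A.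
        destruct (Req_dec (det2 (V i0 k0) (V i k)) 0) as [Z|Z].
        * unfold det2 in Z; unfold dot; simpl. lra.
        * exfalso. apply Hno. exists i0, k0, i, k. repeat split; auto.
    - exists (1, 0). split.
      + intro E. injection E as E1. lra.
      + intros i k Hi Hk A. exfalso. apply Hn0. exists i, k; auto. }
  destruct Ee as [e [He Hea]].
  destruct (fin_unif2 n (fun i k h => dot (padd s (pscale h e)) (V i k) >= -1/2 /\
                                      dot (padd s (pscale (-h) e)) (V i k) >= -1/2)) as [e0 [He0 H0]].
  { intros i k Hi Hk. cbv beta. setoid_rewrite dot_shift.
    destruct (Req_dec (dot s (V i k)) (-1/2)) as [A|A].
    - exists 1; split; [lra|]. intros h Hh. rewrite (Hea i k Hi Hk A). lra.
    - assert (g : dot s (V i k) > -1/2) by (specialize (Ks i k Hi Hk); lra).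
      set (de := dot e (V i k)).
      exists ((dot s (V i k) + 1/2) / (Rabs de + 1)). split.
      + apply Rdiv_lt_0_compat; [lra|]. pose proof (Rabs_pos de); lra.
      + intros h Hh. pose proof (Rabs_pos de).
        assert (Hh2 : h * (Rabs de + 1) < dot s (V i k) + 1/2).
        { destruct Hh as [Hh1 Hh2].
          apply (Rmult_lt_compat_r (Rabs de + 1)) in Hh2; [|lra].
          unfold Rdiv in Hh2. rewrite Rmult_assoc, Rinv_l in Hh2; lra. }
        pose proof (Rle_abs de). pose proof (Rle_abs (-de)). rewrite Rabs_Ropp in H1.
        split; nra. }
  set (h := e0/2).
  assert (Hh : 0 < h < e0) by (unfold h; lra).
  assert (Ky : bigcap n T (padd s (pscale h e))).
  { rewrite (bigcap_iff n T V _ G). intros i k Hi Hk. apply (H0 i k Hi Hk h Hh). }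
  assert (Kz : bigcap n T (padd s (pscale (-h) e))).
  { rewrite (bigcap_iff n T V _ G). intros i k Hi Hk. apply (H0 i k Hi Hk h Hh). }
  assert (E : padd s (pscale h e) = padd s (pscale (-h) e)).
  { apply (Hext _ _ (1/2) Ky Kz); [lra|].
    apply pt_eq; unfold padd, pscale; simpl; field. }
  apply He. destruct e as [e1 e2]. unfold padd, pscale in E; simpl in E.
  injection E as E1 E2. f_equal; nra.
Qed.

Lemma fin_unif2' (n : nat) (Q : nat -> nat -> R -> Prop) :
  (forall i k, (i < n)%nat -> (k < 3)%nat -> exists e, 0 < e /\ forall h, 0 < h < e -> Q i k h) ->
  exists e, 0 < e /\ forall h, 0 < h < e -> forall i k, (i < n)%nat -> (k < 3)%nat -> Q i k h.
Proof.
  intro H. destruct (fin_unif2 n Q H) as [e [He H']]. exists e; split; auto.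
Qed.

Lemma marginH n T V : Good n T V ->
  exists δ, 0 < δ /\ forall s, vertex (bigcap n T) s -> forall i k, (i < n)%nat -> (k < 3)%nat ->
    dot s (V i k) + 1/2 = 0 \/ dot s (V i k) + 1/2 >= δ.
Proof.
  intro G.
  destruct (fin_unif2 n (fun i k h => forall i1 k1, (i1 < n)%nat -> (k1 < 3)%nat ->
     forall i2 k2, (i2 < n)%nat -> (k2 < 3)%nat -> forall s, Kc n V s ->
     dot s (V i1 k1) = -1/2 -> dot s (V i2 k2) = -1/2 -> det2 (V i1 k1) (V i2 k2) <> 0 ->
     dot s (V i k) + 1/2 = 0 \/ dot s (V i k) + 1/2 >= h)) as [e [He H]].
  { intros i k Hi Hk. apply fin_unif2'. intros i1 k1 Hi1 Hk1. apply fin_unif2'.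
    intros i2 k2 Hi2 Hk2.
    destruct (classic (exists s0, Kc n V s0 /\ dot s0 (V i1 k1) = -1/2 /\ dot s0 (V i2 k2) = -1/2 /\
                  det2 (V i1 k1) (V i2 k2) <> 0)) as [[s0 [K0 [A1 [A2 D0]]]]|Hno].
    - assert (Eq : forall s, dot s (V i1 k1) = -1/2 -> dot s (V i2 k2) = -1/2 -> s = s0).
      { intros s B1 B2. apply (uniq2 _ _ s s0 D0); congruence. }
      destruct (Req_dec (dot s0 (V i k) + 1/2) 0) as [Z|Z].
      + exists 1; split; [lra|]. intros h Hh s Ks B1 B2 _. left. rewrite (Eq s B1 B2); auto.
      + exists (dot s0 (V i k) + 1/2). split.
        * specialize (K0 i k Hi Hk). lra.
        * intros h Hh s Ks B1 B2 _. right. rewrite (Eq s B1 B2). lra.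
    - exists 1; split; [lra|]. intros h Hh s Ks B1 B2 D. exfalso. apply Hno. exists s; auto. }
  exists (e/2). split; [lra|]. intros s Hs i k Hi Hk.
  destruct (vertexG n T V s G Hs) as [i1 [k1 [i2 [k2 [Hi1 [Hk1 [Hi2 [Hk2 [A1 [A2 D]]]]]]]]]].
  destruct Hs as [Ks _]. rewrite (bigcap_iff n T V s G) in Ks.
  apply (H i k Hi Hk (e/2) ltac:(lra) i1 k1 Hi1 Hk1 i2 k2 Hi2 Hk2 s Ks A1 A2 D).
Qed.

Lemma touch n T V s : Good n T V -> Distinct n T -> vertex (bigcap n T) s ->
  exists i1 i2, (i1 < n)%nat /\ (i2 < n)%nat /\ forall i l, (i < n)%nat -> (l < 3)%nat ->
    dot s (V i l) = -1/2 -> i = i1 \/ i = i2.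
Proof.
  intros G D Hs.
  destruct (vertexG n T V s G Hs) as [i1 [k1 [i2 [k2 [Hi1 [Hk1 [Hi2 [Hk2 [A1 [A2 Dt]]]]]]]]]].
  exists i1, i2. repeat split; auto. intros i l Hi Hl A.
  destruct (three_line _ _ _ s Dt (unit_V n T V i1 k1 G Hi1 Hk1) (unit_V n T V i2 k2 G Hi2 Hk2)
     (unit_V n T V i l G Hi Hl) A1 A2 A) as [E|E].
  - left. apply (shared n T V i i1 l k1); auto.
  - right. apply (shared n T V i i2 l k2); auto.
Qed.

Fixpoint sumc (L : list nat) (m : nat) : nat :=
  match m with 0%nat => 0%nat | S m' => (sumc L m' + count_occ Nat.eq_dec L m')%nat end.

Lemma sumc_cons x L m : sumc (x :: L) m = (sumc L m + (if Nat.ltb x m then 1 else 0))%nat.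
Proof.
  induction m as [|m IH]; simpl. { destruct x; reflexivity. }
  rewrite IH. destruct (Nat.eq_dec x m) as [E|E];
  destruct (Nat.ltb_spec x m); destruct (Nat.ltb_spec x (S m)); lia.
Qed.

Lemma sumc_le L m : (sumc L m <= length L)%nat.
Proof.
  induction L as [|x L IH].
  - induction m as [|m IHm]; simpl in *; [lia|]. lia.
  - rewrite sumc_cons. simpl. destruct (Nat.ltb x m); lia.
Qed.

Lemma pigeon L m : (length L < 2 * m)%nat -> exists i, (i < m)%nat /\ (count_occ Nat.eq_dec L i <= 1)%nat.
Proof.
  intro H. apply NNPP; intro Hn.
  assert (G : forall m', (m' <= m)%nat -> (2 * m' <= sumc L m')%nat).
  { induction m' as [|m' IH]; intro Hm; simpl; [lia|].
    assert (2 <= count_occ Nat.eq_dec L m')%nat.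
    { destruct (Nat.le_gt_cases (count_occ Nat.eq_dec L m') 1); auto.
      exfalso; apply Hn; exists m'; split; lia. }
    specialize (IH ltac:(lia)). lia. }
  specialize (G m (le_n _)). pose proof (sumc_le L m). lia.
Qed.

Lemma count2 (g : pt -> list nat) (S' : list pt) s s' i :
  In s S' -> In s' S' -> s <> s' -> In i (g s) -> In i (g s') ->
  (2 <= count_occ Nat.eq_dec (flat_map g S') i)%nat.
Proof.
  induction S' as [|x S' IH]; intros H1 H2 Hne G1 G2; [destruct H1|].
  simpl. rewrite count_occ_app.
  assert (M : forall y, In y S' -> In i (g y) -> (0 < count_occ Nat.eq_dec (flat_map g S') i)%nat).
  { intros y Hy Gy. apply count_occ_In. apply in_flat_map. exists y; auto. }
  destruct H1 as [E1|H1]; destruct H2 as [E2|H2].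
  - subst; contradiction.
  - subst x. pose proof (proj1 (count_occ_In Nat.eq_dec (g s) i) G1). pose proof (M s' H2 G2). lia.
  - subst x. pose proof (proj1 (count_occ_In Nat.eq_dec (g s') i) G2). pose proof (M s H1 G1). lia.
  - specialize (IH H1 H2 Hne G1 G2). lia.
Qed.

Lemma len_fm (g : pt -> list nat) S' : (forall s, length (g s) = 2%nat) ->
  length (flat_map g S') = (2 * length S')%nat.
Proof.
  intro H. induction S' as [|x S' IH]; simpl; auto. rewrite length_app, H, IH. lia.
Qed.

Lemma choose_ik n T V (S' : list pt) : Good n T V -> Distinct n T -> (2 <= n)%nat ->
  (forall s, In s S' -> vertex (bigcap n T) s) -> (length S' < n)%nat ->
  exists i k, (i < n)%nat /\ (k < 3)%nat /\ forall s, In s S' -> forall l, (l < 3)%nat ->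
    dot s (V i l) = -1/2 -> l = k.
Proof.
  intros G D Hn HS Hlen.
  assert (HF : forall s, exists pr : nat * nat, vertex (bigcap n T) s ->
     forall i l, (i < n)%nat -> (l < 3)%nat -> dot s (V i l) = -1/2 -> i = fst pr \/ i = snd pr).
  { intro s. destruct (classic (vertex (bigcap n T) s)) as [Hv|Hv].
    - destruct (touch n T V s G D Hv) as [i1 [i2 [_ [_ Ht]]]]. exists (i1, i2). intros _; auto.
    - exists (0%nat, 0%nat). intro; contradiction. }
  set (F := fun s => proj1_sig (constructive_indefinite_description _ (HF s))).
  assert (HFp : forall s, vertex (bigcap n T) s ->
     forall i l, (i < n)%nat -> (l < 3)%nat -> dot s (V i l) = -1/2 -> i = fst (F s) \/ i = snd (F s)).
  { intro s. unfold F. destruct (constructive_indefinite_description _ (HF s)) as [pr Hpr]. simpl; auto. }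
  clearbody F.
  set (g := fun s => fst (F s) :: snd (F s) :: nil).
  assert (Hg : forall s, In s S' -> forall i l, (i < n)%nat -> (l < 3)%nat ->
             dot s (V i l) = -1/2 -> In i (g s)).
  { intros s Hs i l Hi Hl A. unfold g. simpl. destruct (HFp s (HS s Hs) i l Hi Hl A); auto. }
  destruct (pigeon (flat_map g S') n) as [i [Hi Hc]].
  { rewrite len_fm by reflexivity. lia. }
  destruct (classic (exists s0 l0, In s0 S' /\ (l0 < 3)%nat /\ dot s0 (V i l0) = -1/2))
    as [[s0 [l0 [Hs0 [Hl0 A0]]]]|Hno].
  - exists i, l0. repeat split; auto. intros s Hs l Hl A.
    assert (s = s0).
    { apply NNPP; intro Hne.
      pose proof (count2 g S' s s0 i Hs Hs0 Hne (Hg s Hs i l Hi Hl A) (Hg s0 Hs0 i l0 Hi Hl0 A0)).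
      lia. }
    subst s0. destruct (Nat.eq_dec l l0) as [|Hne]; auto. exfalso.
    destruct (HS s Hs) as [Ks _]. rewrite (bigcap_iff n T V s G) in Ks.
    apply (two_edges n T V s i l l0 G D Hn Ks Hi Hl Hl0 Hne A A0).
  - exists i, 0%nat. repeat split; auto; try lia. intros s Hs l Hl A. exfalso. apply Hno.
    exists s, l; auto.
Qed.

Lemma vert_V n T V i k : Good n T V -> (i < n)%nat -> (k < 3)%nat -> vertex (T i) (V i k).
Proof.
  intros G Hi Hk. pose proof (frame_rot _ _ _ (frame_rot _ _ _ (frame_k n T V i k G Hi Hk))) as F.
  apply (vertex_frame _ _ _ _ F).
  - intros x Hx. rewrite (T_iff n T V i x G Hi), (all3 (fun l => dot x (V i l) >= -1/2) k Hk) in Hx.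
    tauto.
  - rewrite (T_iff n T V i _ G Hi). intros l Hl. apply (dot_in_tri n T V); auto.
Qed.
Lemma Jgeo a b c d δ : frame a b c -> dot d d = 1 -> dot d c < -1/2 -> 0 < δ ->
  exists e, 0 < e /\ forall eps, 0 < eps < e ->
    exists t, 0 <= t <= 1 /\
      noncollinear (pscale (sqrt (1-eps)) c)
        (padd (pscale (1-t) (pscale (sqrt (1-eps)) a)) (pscale t (pscale (sqrt (1-eps)) d)))
        (padd (pscale (1-t) (pscale (sqrt (1-eps)) b)) (pscale t (pscale (sqrt (1-eps)) d))) /\
      forall x, dot x a + 1/2 >= δ -> dot x b + 1/2 >= δ -> dot x c >= -1/2 ->
        conv3 (pscale (sqrt (1-eps)) c)
          (padd (pscale (1-t) (pscale (sqrt (1-eps)) a)) (pscale t (pscale (sqrt (1-eps)) d)))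
          (padd (pscale (1-t) (pscale (sqrt (1-eps)) b)) (pscale t (pscale (sqrt (1-eps)) d))) x.
Proof.
  intros F Hd Hdc Hδ.
  pose proof (frame_unit _ _ _ F) as [Ua [Ub Uc]].
  pose proof (frame_facts _ _ _ F) as [_ [_ [_ Hs]]].
  pose proof (frame_det _ _ _ F) as Dab.
  pose proof (cs_bound d a Hd Ua) as Ba.
  pose proof (cs_bound d b Hd Ub) as Bb.
  pose proof (frame_decomp a b c d F) as Dd.
  pose proof (Hs d) as Sd.
  set (xd := (1+2*dot d a)/3) in *. set (yd := (1+2*dot d b)/3) in *.
  set (zd := (1+2*dot d c)/3) in *.
  assert (Hxyz : xd + yd + zd = 1) by (unfold xd, yd, zd; lra).
  assert (Hxd : -1/3 <= xd <= 1) by (unfold xd; lra).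
  assert (Hyd : -1/3 <= yd <= 1) by (unfold yd; lra).
  assert (HZ : 0 < - zd) by (unfold zd; lra).
  clearbody xd yd zd.
  set (Z := - zd).
  set (dl := 2*δ/3).
  assert (Hdl : 0 < dl) by (unfold dl; lra).
  exists (Rmin (1/2) (Rmin (dl * Z / (Z+1)) (Z/2))). split.
  { apply Rmin_glb_lt; [lra|]. apply Rmin_glb_lt; [|unfold Z; lra].
    unfold Z; apply Rdiv_lt_0_compat; nra. }
  intros eps Heps.
  assert (E1 : eps < 1/2) by (pose proof (Rmin_l (1/2) (Rmin (dl * Z / (Z+1)) (Z/2))); lra).
  assert (E2 : eps < dl * Z / (Z+1)).
  { pose proof (Rmin_r (1/2) (Rmin (dl * Z / (Z+1)) (Z/2))).
    pose proof (Rmin_l (dl * Z / (Z+1)) (Z/2)). lra. }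
  assert (E3 : eps < Z/2).
  { pose proof (Rmin_r (1/2) (Rmin (dl * Z / (Z+1)) (Z/2))).
    pose proof (Rmin_r (dl * Z / (Z+1)) (Z/2)). lra. }
  destruct (sqrt_facts eps (conj (proj1 Heps) E1)) as [Hr2 [Hr1 [Hr3 Hr4]]].
  set (r := sqrt (1 - eps)) in *. clearbody r.
  set (rho := (1 - r)/3).
  assert (Hrho : 0 < rho <= eps/3) by (unfold rho; lra).
  assert (Hrho2 : rho * (Z+1) < dl * Z).
  { apply (Rmult_lt_compat_r (Z+1)) in E2; [|unfold Z; lra].
    unfold Rdiv in E2. rewrite Rmult_assoc, Rinv_l in E2 by (unfold Z; lra). nra. }
  set (t := rho / (r * Z)).
  assert (Ht : 0 <= t < 1).
  { unfold t. split. apply Rlt_le, Rdiv_lt_0_compat; [lra| apply Rmult_lt_0_compat; lra].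
    apply (Rmult_lt_reg_r (r*Z)); [apply Rmult_lt_0_compat; lra|].
    unfold Rdiv; rewrite Rmult_assoc, Rinv_l, Rmult_1_r, Rmult_1_l; [nra|].
    apply Rgt_not_eq, Rmult_lt_0_compat; lra. }
  assert (Htz : r * t * Z = rho) by (unfold t; field; split; lra).
  exists t. split; [lra|]. split.
  -
    unfold noncollinear, padd, pscale; simpl.
    replace (fst d) with (xd * fst a + yd * fst b + zd * fst c) by (rewrite Dd at 1; reflexivity).
    replace (snd d) with (xd * snd a + yd * snd b + zd * snd c) by (rewrite Dd at 1; reflexivity).
    destruct F as [_ [_ [_ [F4 F5]]]].
    replace (fst c) with (- fst a - fst b) by lra. replace (snd c) with (- snd a - snd b) by lra.
    replace zd with (1 - xd - yd) by lra.
    intro E.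
    assert (E' : 3 * (r*r) * (1-t) * (1 + t * Z) * det2 a b = 0).
    { rewrite <- E. unfold det2, Z. replace zd with (1 - xd - yd) by lra. ring. }
    assert (0 < 3 * (r*r) * (1-t) * (1 + t * Z)).
    { repeat apply Rmult_lt_0_compat; try lra; try nra. }
    apply Rmult_integral in E' as [E'|E']; lra.
  - intros x Hxa Hxb Hxc.
    pose proof (frame_decomp a b c x F) as Dx.
    pose proof (Hs x) as Sx.
    set (p := (1+2*dot x a)/3) in *. set (q := (1+2*dot x b)/3) in *.
    set (w := (1+2*dot x c)/3) in *.
    assert (Hpqw : p + q + w = 1) by (unfold p, q, w; lra).
    assert (Hp : p >= dl) by (unfold p, dl; lra).
    assert (Hq : q >= dl) by (unfold q, dl; lra).
    assert (Hw : w >= 0) by (unfold w; lra).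
    clearbody p q w.
    set (S := (r + rho - w)/(r + rho)).
    assert (Hrr : 0 < r + rho) by (unfold rho; lra).
    assert (HS : 0 <= S <= 1).
    { unfold S. split.
      - apply Rmult_le_pos; [|apply Rlt_le, Rinv_0_lt_compat; auto]. unfold rho in *. nra.
      - apply (Rmult_le_reg_r (r+rho)); auto. unfold Rdiv. rewrite Rmult_assoc, Rinv_l; lra. }
    set (al := 1 - S).
    set (be := ((p - rho)/r - S*t*xd)/(1-t)).
    set (ga := ((q - rho)/r - S*t*yd)/(1-t)).
    assert (Hpt : (p - rho)/r >= t).
    { assert (Ep : (p-rho)/r - t = ((p-rho)*Z - rho)/(r*Z)) by (unfold t; field; unfold Z; lra).
      assert (0 <= ((p-rho)*Z - rho)/(r*Z)).
      { apply Rmult_le_pos; [unfold Z in *; nra|]. apply Rlt_le, Rinv_0_lt_compat.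
        unfold Z in *; nra. }
      lra. }
    assert (Hqt : (q - rho)/r >= t).
    { assert (Ep : (q-rho)/r - t = ((q-rho)*Z - rho)/(r*Z)) by (unfold t; field; unfold Z; lra).
      assert (0 <= ((q-rho)*Z - rho)/(r*Z)).
      { apply Rmult_le_pos; [unfold Z in *; nra|]. apply Rlt_le, Rinv_0_lt_compat.
        unfold Z in *; nra. }
      lra. }
    assert (HSx : S * xd <= 1) by nra.
    assert (HSy : S * yd <= 1) by nra.
    assert (Hbe : 0 <= be).
    { unfold be. apply Rmult_le_pos; [|apply Rlt_le, Rinv_0_lt_compat; lra]. nra. }
    assert (Hga : 0 <= ga).
    { unfold ga. apply Rmult_le_pos; [|apply Rlt_le, Rinv_0_lt_compat; lra]. nra. }
    assert (HzZ : zd = - Z) by (unfold Z; ring).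
    assert (Er : r = 1/(1+3*t*Z)).
    { assert (r * (1 + 3*t*Z) = 1) by (unfold rho in Htz; nra).
      field_simplify_eq; [lra| nra]. }
    assert (Erho : rho = t*Z/(1+3*t*Z)) by (rewrite <- Htz, Er; field; nra).
    assert (H3 : 0 < 1 + 3*t*Z) by nra.
    assert (Hw' : w = 1 - p - q) by lra.
    assert (Hy' : yd = 1 + Z - xd) by lra.
    destruct F as [_ [_ [_ [F4 F5]]]].
    assert (Ec1 : fst c = - fst a - fst b) by lra.
    assert (Ec2 : snd c = - snd a - snd b) by lra.
    assert (Ed1 : fst d = xd * fst a + yd * fst b + zd * fst c) by (rewrite Dd at 1; reflexivity).
    assert (Ed2 : snd d = xd * snd a + yd * snd b + zd * snd c) by (rewrite Dd at 1; reflexivity).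
    assert (Ex1 : fst x = p * fst a + q * fst b + w * fst c) by (rewrite Dx at 1; reflexivity).
    assert (Ex2 : snd x = p * snd a + q * snd b + w * snd c) by (rewrite Dx at 1; reflexivity).
    clearbody Z t rho.
    rewrite conv3_bary. exists al, be, ga. split; [unfold al; lra|]. split; auto. split; auto.
    split.
    + unfold al, be, ga, S. rewrite Erho, Er, Hw', Hy'. field. split; nra.
    + apply pt_eq; unfold lin3, padd, pscale; simpl.
      * rewrite Ed1, Ex1, Ec1, HzZ. unfold al, be, ga, S. rewrite Erho, Er, Hw', Hy'. field. split; nra.
      * rewrite Ed2, Ex2, Ec2, HzZ. unfold al, be, ga, S. rewrite Erho, Er, Hw', Hy'. field. split; nra.
Qed.
Definition Aset n (T : nat -> pt -> Prop) eps (y : pt) : Prop :=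
  exists i, (i < n)%nat /\ scaled_vertex eps (T i) y.

Lemma inA n T V eps i k : Good n T V -> (i < n)%nat -> (k < 3)%nat ->
  Aset n T eps (pscale (sqrt (1-eps)) (V i k)).
Proof.
  intros G Hi Hk. exists i. split; auto. exists (V i k). split; auto.
  apply (vert_V n T V); auto.
Qed.

Theorem mainTheorem14 (n : nat) (T : nat -> pt -> Prop) :
  (2 <= n)%nat ->
  (forall i, (i < n)%nat -> in_E (T i)) ->
  (forall i j, (i < n)%nat -> (j < n)%nat -> i <> j ->
     ~ (forall x, T i x <-> T j x)) ->
  exists eps0 : R, 0 < eps0 /\
    forall eps : R, 0 < eps < eps0 ->
      forall S' : list pt,
        NoDup S' ->
        (forall s, In s S' -> vertex (bigcap n T) s) ->
        (length S' < n)%nat ->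
        yes_instance (hullP n T eps) S'.
Proof.
  intros Hn HE D.
  destruct (good_exists n T HE) as [V G].
  destruct (marginH n T V G) as [δ [Hδ HM]].
  destruct (fin_unif2 n (fun i k eps => exists P1 P2 P3, noncollinear P1 P2 P3 /\
      (forall x, conv3 P1 P2 P3 x -> hullP n T eps x) /\
      (forall x, dot x (V i ((k+1) mod 3)%nat) + 1/2 >= δ -> dot x (V i ((k+2) mod 3)%nat) + 1/2 >= δ ->
         dot x (V i k) >= -1/2 -> conv3 P1 P2 P3 x))) as [e [He HJ]].
  { intros i k Hi Hk.
    destruct (other_idx n i Hn Hi) as [j [Hj Hij]].
    assert (Hd : exists l, (l < 3)%nat /\ dot (V i k) (V j l) < -1/2).
    { apply NNPP; intro Hno. apply (same_tri n T V i j k G D Hi Hj Hij Hk).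
      intros l Hl. apply Rnot_lt_ge. intro Hlt. apply Hno. exists l; auto. }
    destruct Hd as [l [Hl Hdl]].
    pose proof (frame_k n T V i k G Hi Hk) as F.
    destruct (Jgeo _ _ _ (V j l) δ F (unit_V n T V j l G Hj Hl) ltac:(rewrite dot_comm; exact Hdl) Hδ)
      as [e [He HJ]].
    exists e; split; auto. intros eps Heps.
    destruct (HJ eps Heps) as [t [Ht [Hnc Hin]]].
    eexists; eexists; eexists; split; [exact Hnc|]. split; [|exact Hin].
    intros x Hx. unfold conv3 in Hx. refine (conv_trans (Aset n T eps) _ x _ Hx).
    assert (M1 : (((k+1) mod 3) < 3)%nat) by (apply Nat.mod_upper_bound; lia).
    assert (M2 : (((k+2) mod 3) < 3)%nat) by (apply Nat.mod_upper_bound; lia).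
    intros y [Ey|[Ey|Ey]]; subst y.
    - apply conv_in, (inA n T V); auto.
    - apply conv_seg; auto; apply (inA n T V); auto.
    - apply conv_seg; auto; apply (inA n T V); auto. }
  exists e. split; auto. intros eps Heps S' _ HS Hlen.
  destruct (choose_ik n T V S' G D Hn HS Hlen) as [i [k [Hi [Hk Hik]]]].
  destruct (HJ i k Hi Hk eps Heps) as [P1 [P2 [P3 [Hnc [Hhull Hin]]]]].
  exists (conv3 P1 P2 P3). split; [|split].
  - exists P1, P2, P3. split; auto. intro; tauto.
  - intros s Hs. pose proof (HS s Hs) as Hv. pose proof Hv as [Ks _].
    rewrite (bigcap_iff n T V s G) in Ks.
    assert (M1 : (((k+1) mod 3) < 3)%nat) by (apply Nat.mod_upper_bound; lia).
    assert (M2 : (((k+2) mod 3) < 3)%nat) by (apply Nat.mod_upper_bound; lia).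
    assert (N1 : ((k+1) mod 3)%nat <> k) by (destruct k as [|[|[|k]]]; simpl; lia).
    assert (N2 : ((k+2) mod 3)%nat <> k) by (destruct k as [|[|[|k]]]; simpl; lia).
    apply Hin.
    + destruct (HM s Hv i _ Hi M1) as [Z|Z]; auto.
      exfalso. apply N1. apply (Hik s Hs); auto. lra.
    + destruct (HM s Hv i _ Hi M2) as [Z|Z]; auto.
      exfalso. apply N2. apply (Hik s Hs); auto. lra.
    + apply Ks; auto.
  - exact Hhull.
Qed.
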